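(* Let $G$, $z$, $g_1,\dots,g_{2r}$, $S=\{g_1,\dots,g_{2r}\}$ and $\Gamma=\mathrm{Cay}(G,S)$ be as in the context. Then $\Gamma$ is $2$-arc-transitive; more precisely, the group $\hat G\rtimes\tilde S_{2r}\le\mathrm{Aut}(\Gamma)$ acts transitively on the $2$-arcs of $\Gamma$, where $\tilde S_{2r}=\{\tilde\sigma:\sigma\in S_{2r}\}$ is the group of automorphisms of $G$ with $g_i^{\tilde\sigma}=g_{i^\sigma}$ and $z^{\tilde\sigma}=z$, which fixes the vertex $1$ and acts on $S$ as the full symmetric group.
   Context: Let $r\ge1$ and $G$ an extraspecial $2$-group of order $2^{2r+1}$ (i.e. $|Z(G)|=2$, $G/Z(G)\cong\mathbb{Z}_2^{2r}$), $Z=Z(G)=\langle z\rangle$ identified with $\mathbb{F}_2$, and $G/Z$ equipped with the quadratic form $Q(Zx)=x^2$ and bilinear form $B(Zx,Zy)=[x,y]$. Assume $\{Zg_1,\dots,Zg_{2r}\}$ is a symmetric basis of $G/Z$ ($Q(Zg_i)=0$, $B(Zg_i,Zg_j)=1$ for $i\ne j$), so $g_i^2=1$ and $[g_i,g_j]=z$ for $i\neq j$. $\mathrm{Cay}(G,S)$ has vertex set $G$ and edges $\{x,sx\}$, $x\in G$, $s\in S$; $\hat G$ is the group of right multiplications $x\mapsto xg$. A $2$-arc is a triple $(u,v,w)$ with $u\sim v\sim w$ and $u\ne w$. *)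

(* Defs.v *)
From mathcomp Require Import all_boot all_fingroup all_solvable.
Set Implicit Arguments. Unset Strict Implicit. Unset Printing Implicit Defensive.
Local Open Scope group_scope.

(* Cayley graph Cay(G,S): vertex set G, edges {x, s x} for x in G, s in S.
   Adjacency x ~ y  iff  y = s x for some s in S, i.e. y * x^-1 \in S. *)
Definition cay_adj (gT : finGroupType) (S : {set gT}) (x y : gT) : bool :=
  (y * x^-1) \in S.

Definition two_arc (gT : finGroupType) (G S : {set gT}) (u v w : gT) : bool :=
  [&& u \in G, v \in G, w \in G, cay_adj S u v, cay_adj S v w & u != w].

(* Main.v *)
Require Import Defs.
From mathcomp Require Import all_boot all_fingroup all_solvable.
From mathcomp Require Import zify.
Local Open Scope group_scope.

Lemma cent_of (gT : finGroupType) (G : {group gT}) (z : gT) :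
  z \in 'Z(G) -> forall x, x \in G -> commute x z.
Proof. by move=> /centerP [_ cz] x Gx; apply: commute_sym; apply: cz. Qed.

Lemma conj_of (gT : finGroupType) (G : {group gT}) (z : gT) :
  z \in 'Z(G) -> forall x, x \in G -> z ^ x = z.
Proof.
move=> Zz x Gx; apply/conjg_fixP/commgP; apply: commute_sym; exact: (@cent_of _ G z Zz x Gx).
Qed.

Lemma prod_constg (gT : finGroupType) (I : finType) (P : pred I) (c : gT) :
  \prod_(i | P i) c = c ^+ #|P|.
Proof.
rewrite big_const; elim: #|_| => [|k IH] //=; by rewrite IH expgS.
Qed.

Lemma comm_prodg (gT : finGroupType) (G : {group gT}) (z : gT) (I : finType)
  (P : pred I) (F : I -> gT) (x : gT) :
  z \in 'Z(G) ->
  (forall x y, x \in G -> y \in G -> [~ x, y] = 1 \/ [~ x, y] = z) ->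
  x \in G -> (forall i, F i \in G) ->
  [~ x, \prod_(i | P i) F i] = \prod_(i | P i) [~ x, F i].
Proof.
move=> Zz cZ Gx GF.
suff [] : (\prod_(i | P i) F i \in G) /\ [~ x, \prod_(i | P i) F i] = \prod_(i | P i) [~ x, F i] by [].
apply: (big_rec2 (fun Y C => Y \in G /\ [~ x, Y] = C)); first by rewrite group1 commg1.
move=> i Y C _ [GY <-]; split; first by rewrite groupM.
rewrite commgMJ.
have GZ := @conj_of _ G z Zz; have cz := @cent_of _ G z Zz.
case: (cZ x (F i) Gx (GF i)) => ->; case: (cZ x Y Gx GY) => ->;
  rewrite ?conj1g ?mulg1 ?mul1g ?GZ //.
Qed.

Lemma prod_expg (gT : finGroupType) (I : finType) (P : pred I) (c : gT) (e : I -> nat) :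
  \prod_(i | P i) c ^+ e i = c ^+ (\sum_(i | P i) e i)%N.
Proof.
apply: (big_rec2 (fun C s => C = c ^+ s)) => // i C s _ ->; by rewrite expgD.
Qed.

Lemma comm_y (gT : finGroupType) (G : {group gT}) (z : gT) (n : nat)
  (g : 'I_n -> gT) (a j : 'I_n) :
  n %% 2 = 0 -> z \in 'Z(G) -> z ^+ 2 = 1 ->
  (forall x y, x \in G -> y \in G -> [~ x, y] = 1 \/ [~ x, y] = z) ->
  (forall i, g i \in G) -> (forall i j, i != j -> [~ g i, g j] = z) ->
  [~ g j, \prod_(k | k != a) g k] = if j == a then z else 1.
Proof.
move=> n2 Zz zz cZ Gg gc.
rewrite (@comm_prodg _ G z _ (fun k => k != a) g (g j) Zz cZ (Gg j) Gg).
have hn : 0 < n by case: a => [m]; lia.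
rewrite (eq_bigr (fun k => z ^+ (j != k))); last first.
  by move=> k _; case: eqP => [-> | /eqP jk]; rewrite ?commgg ?gc.
rewrite prod_expg -(expg_mod _ zz).
have hc : #|(fun k : 'I_n => k != a)| = n.-1.
  by have := cardC1 a; rewrite card_ord => <-; apply: eq_card.
case: eqP => [-> | /eqP nja].
  rewrite (eq_bigr (fun _ => 1%N)); last by move=> k ka; rewrite eq_sym ka.
  rewrite sum1_card hc.
  have -> : (n.-1 %% 2 = 1)%N by lia.
  by [].
rewrite (bigD1 j) //= eqxx /=.
rewrite (eq_bigr (fun _ => 1%N)); last by move=> k /andP [_ kj]; rewrite eq_sym kj.
rewrite sum1_card add0n.
have -> : #|(fun k : 'I_n => (k != a) && (k != j))| = n.-2.
  move: hc; rewrite (cardD1 j) [j \in _]unfold_in /= nja /= => h.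
  rewrite -[n.-2]/(n.-1.-1) -h /=; apply: eq_card => k; rewrite !inE andbC //.
have -> : (n.-2 %% 2 = 0)%N by lia.
by [].
Qed.

Lemma tlift (gT : finGroupType) (G : {group gT}) (z : gT) (n : nat)
  (g : 'I_n -> gT) (a b : 'I_n) :
  n %% 2 = 0 -> z \in 'Z(G) -> z != 1 -> z ^+ 2 = 1 ->
  (forall x y, x \in G -> y \in G -> [~ x, y] = 1 \/ [~ x, y] = z) ->
  (forall i, g i \in G) -> (forall i, g i ^+ 2 = 1) ->
  (forall i j, i != j -> [~ g i, g j] = z) -> a != b ->
  exists2 f : {perm gT}, f \in Aut G &
     (forall i, f (g i) = g (tperm a b i)) /\ f z = z.
Proof.
move=> n2 Zz zn1 zz cZ Gg g2 gc ab.
have Gz : z \in G by case/centerP: Zz.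
have cz := @cent_of _ G z Zz; have conjz := @conj_of _ G z Zz.
have zV : z^-1 = z by apply/eqP; rewrite eq_invg_mul -expg2 zz.
have zz' : z * z = 1 by rewrite -expg2.
have zF : (z == 1) = false by apply/negbTE.
set d := g a * g b.
set y := \prod_(k | k != a) g k.
have Gd : d \in G by rewrite groupM.
have Gy : y \in G by apply: group_prod.
have cc : forall x u v, x \in G -> u \in G -> v \in G ->
    [~ u, v] ^ x = [~ u, v] /\ commute x [~ u, v].
  move=> x u v Gx Gu Gv; case: (cZ u v Gu Gv) => ->.
    by rewrite conj1g; split => //; apply/commgP; rewrite commg1.
  by split; [apply: conjz | apply: cz].
have dd : d * d = z.
  rewrite /d -mulgA [g b * _]mulgA (commgC (g b) (g a)) gc 1?eq_sym //.
  rewrite -!mulgA -(cz (g b) (Gg b)) !mulgA -expg2 g2 mul1g -expg2 g2 mul1g //.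
have dE : d = g a * g b by [].
clearbody d.
pose psi x := x * (if [~ x, d] == 1 then 1 else d).
pose phi x := psi x ^ y.
have psiG : forall x, x \in G -> psi x \in G.
  by move=> x Gx; rewrite /psi; case: ifP => _; rewrite groupM.
have psiM : {in G &, {morph psi : x w / x * w}}.
  move=> x w Gx Gw; rewrite /psi commMgJ.
  case: (cZ x d Gx Gd) => ->; case: (cZ w d Gw Gd) => hw;
    rewrite hw ?conj1g ?conjz ?mul1g ?mulg1 ?eqxx ?zF ?zz' ?eqxx ?mulgA ?mulg1 //.
  - have cdw : commute d w by apply/commute_sym/commgP; rewrite hw.
    by rewrite -mulgA -cdw mulgA.
  - rewrite -(mulgA x d w) (commgC d w) -(invgR w d) hw zV !mulgA.
    rewrite -(mulgA (x * w * d) z d) -(cz d Gd) mulgA -(mulgA (x * w) d d) dd.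
    by rewrite -mulgA zz' mulg1.
have comm_psi : forall x, x \in G -> [~ psi x, d] = [~ x, d].
  move=> x Gx; rewrite /psi; case: ifP => _; rewrite ?mulg1 // commMgJ commgg mulg1.
  by case: (cc d x d Gd Gx Gd).
have psi_inj : {in G &, injective psi}.
  move=> x w Gx Gw e; have := congr1 (fun t => [~ t, d]) e; rewrite /= !comm_psi // => c.
  by move: e; rewrite /psi c; apply: mulIg.
have phiG : forall x, x \in G -> phi x \in G by move=> x Gx; rewrite /phi groupJ ?psiG.
have phi_inj : {in G &, injective phi}.
  by move=> x w Gx Gw /conjg_inj; apply: psi_inj.
have phi_closed : [set phi x | x in G] \subset G.
  by apply/subsetP => _ /imsetP [x Gx ->]; apply: phiG.
pose f := perm_in phi_inj phi_closed.
have fE : {in G, f =1 phi} by apply: perm_inE.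
have yE : forall j, [~ g j, y] = if j == a then z else 1.
  by move=> j; exact: (@comm_y _ G z n g a j n2 Zz zz cZ Gg gc).
have dC : forall k, [~ g k, d] = [~ g k, g b] * [~ g k, g a].
  by move=> k; rewrite dE commgMJ; case: (cc (g b) (g k) (g a) (Gg b) (Gg k) (Gg a)) => ->.
exists f.
  rewrite inE perm_in_on /=; apply/morphicP => x w Gx Gw.
  by rewrite !fE ?groupM // /phi psiM // conjMg.
split; last first.
  rewrite fE // /phi /psi.
  have -> : [~ z, d] = 1 by apply/eqP/commgP; apply: commute_sym; apply: cz.
  by rewrite eqxx mulg1 conjz.
move=> i; rewrite fE // /phi /psi dC.
have ba : b != a by rewrite eq_sym.
case: tpermP => [-> | -> | /eqP ia /eqP ib].
- rewrite gc // commgg mulg1 zF dE mulgA -expg2 g2 mul1g conjg_mulR yE.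
  by rewrite (negbTE ba) mulg1.
- rewrite commgg mul1g gc // zF dE mulgA (commgC (g b) (g a)) gc //.
  rewrite -mulgA -(cz (g b) (Gg b)) mulgA -(mulgA (g a)) -expg2 g2 mulg1.
  by rewrite conjMg conjg_mulR yE eqxx conjz // -mulgA zz' mulg1.
- rewrite !gc // zz' eqxx mulg1 conjg_mulR yE.
  by rewrite (negbTE ia) mulg1.
Qed.

Lemma slift (gT : finGroupType) (G : {group gT}) (z : gT) (n : nat)
  (g : 'I_n -> gT) (sigma : 'S_n) :
  n %% 2 = 0 -> z \in 'Z(G) -> z != 1 -> z ^+ 2 = 1 ->
  (forall x y, x \in G -> y \in G -> [~ x, y] = 1 \/ [~ x, y] = z) ->
  (forall i, g i \in G) -> (forall i, g i ^+ 2 = 1) ->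
  (forall i j, i != j -> [~ g i, g j] = z) ->
  exists2 f : {perm gT}, f \in Aut G &
     (forall i, f (g i) = g (sigma i)) /\ f z = z.
Proof.
move=> n2 Zz zn1 zz cZ Gg g2 gc.
case: (prod_tpermP sigma) => ts -> {sigma}; elim: ts => [|[a b] ts IH] /=.
  move=> _; exists 1; first by rewrite group1.
  split=> [i|]; rewrite ?perm1 //. by rewrite big_nil perm1.
case/andP => /= ab /IH [f2 Af2 [f2g f2z]].
have [f1 Af1 [f1g f1z]] := @tlift _ G z n g a b n2 Zz zn1 zz cZ Gg g2 gc ab.
exists (f1 * f2); first by rewrite groupM.
by split=> [i|]; rewrite ?big_cons ?permM ?f1g ?f2g ?f1z ?f2z.
Qed.

Theorem theorem4p2 (gT : finGroupType) (G : {group gT}) (r : nat)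
  (z : gT) (g : 'I_(r.*2) -> gT) :
  (1 <= r)%N ->
  (* G is an extraspecial 2-group of order 2^(2r+1) *)
  2.-group G -> extraspecial G -> #|G| = (2 ^ (r.*2).+1)%N ->
  (* Z(G) = <z> *)
  'Z(G) = <[z]> ->
  (* the g_i lie in G, their images form a (symmetric) basis of G/Z *)
  (forall i, g i \in G) ->
  <<[set coset 'Z(G) (g i) | i : 'I_(r.*2)]>> = G / 'Z(G) ->
  (forall i, g i ^+ 2 = 1) ->
  (forall i j, i != j -> [~ g i, g j] = z) ->
  let S := [set g i | i : 'I_(r.*2)] in
  (* (1) every sigma in S_{2r} lifts to an automorphism of G fixing z *)
  (forall sigma : 'S_(r.*2), exists2 f : {perm gT}, f \in Aut G &
       (forall i, f (g i) = g (sigma i)) /\ f z = z)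
  /\
  (* (2) Ghat x| S~_{2r} <= Aut(Gamma): x |-> f(x) * h is an automorphism of Cay(G,S) *)
  (forall (sigma : 'S_(r.*2)) (f : {perm gT}) (h : gT),
       f \in Aut G -> (forall i, f (g i) = g (sigma i)) -> f z = z -> h \in G ->
       [set f x * h | x in G] = G /\
       {in G &, injective (fun x => f x * h)} /\
       {in G &, forall x y, cay_adj S (f x * h) (f y * h) = cay_adj S x y})
  /\
  (* (3) Ghat x| S~_{2r} is transitive on 2-arcs of Cay(G,S) *)
  (forall u v w u' v' w', two_arc G S u v w -> two_arc G S u' v' w' ->
     exists sigma : 'S_(r.*2), exists f : {perm gT}, exists h : gT,
       [/\ f \in Aut G, (forall i, f (g i) = g (sigma i)), f z = z, h \in G &
           [/\ f u * h = u', f v * h = v' & f w * h = w']]).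
Proof.
move=> r1 pG [[_ derZ] pZ] cardG HZ Gg gen g2 gc S.
have n2 : (r.*2 %% 2 = 0)%N by rewrite -muln2 modnMl.
have Zz : z \in 'Z(G) by rewrite HZ cycle_id.
have cz := @cent_of _ G z Zz.
have zn1 : z != 1.
  by apply/eqP => z1; move: pZ; rewrite HZ z1 cycle1 cards1.
have h0 : (0 < r.*2)%N by lia.
have h1 : (1 < r.*2)%N by lia.
have zz : z ^+ 2 = 1.
  rewrite -(gc (Ordinal h0) (Ordinal h1)) // -commgX ?g2 ?commg1 //.
  by rewrite gc //; apply: cz.
have oz : #[z] = 2%N.
  have o1 : (1 < #[z])%N by rewrite order_gt1.
  have o2 : (#[z] %| 2)%N by rewrite order_dvdn zz.
  have := dvdn_leq (isT : (0 < 2)%N) o2; lia.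
have cZ : forall x y, x \in G -> y \in G -> [~ x, y] = 1 \/ [~ x, y] = z.
  move=> x y Gx Gy; apply/set2P; rewrite -cycle2g // -HZ -derZ derg1.
  exact: mem_commg.
have P1 : forall sigma : 'S_(r.*2), exists2 f : {perm gT}, f \in Aut G &
       (forall i, f (g i) = g (sigma i)) /\ f z = z.
  by move=> sigma; apply: (@slift _ G z _ g sigma n2 Zz zn1 zz cZ Gg g2 gc).
split; first exact: P1.
split.
  move=> sigma f h Af fg fz Gh.
  have fM := morphicP (Aut_morphic Af).
  have fG : forall x, x \in G -> f x \in G by move=> x; apply: Aut_closed.
  have finj : {in G &, injective (fun x => f x * h)}.
    by move=> x y _ _ /mulIg /perm_inj.
  split.
    apply/eqP; rewrite eqEcard card_in_imset // leqnn andbT.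
    by apply/subsetP => _ /imsetP [x Gx ->]; rewrite groupM ?fG.
  split => // x y Gx Gy; rewrite /cay_adj.
  have fV : (f x)^-1 = f x^-1 by rewrite -(autmE Af) morphV.
  rewrite invMg mulgA mulgK fV -fM ?groupV //.
  have Gw : y * x^-1 \in G by rewrite groupM ?groupV.
  move: (y * x^-1) Gw => w Gw.
  apply/imsetP/imsetP => [[j _ e] | [i _ ->]].
    exists (sigma^-1 j) => //; apply: (@perm_inj _ f); by rewrite e fg permKV.
  by exists (sigma i); rewrite ?fg.
have arc : forall u v w, two_arc G S u v w ->
    exists a b, [/\ a != b, u \in G, v = g a * u & w = g b * v].
  move=> u v w /and5P [Gu Gv Gw uv /andP [vw uw]].
  move: uv vw; rewrite /cay_adj => /imsetP [a _ ea] /imsetP [b _ eb].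
  have ev : v = g a * u by rewrite -ea mulgVK.
  have ew : w = g b * v by rewrite -eb mulgVK.
  exists a, b; split => //.
  apply: contraNneq uw => ab; by rewrite ew ev ab mulgA -expg2 g2 mul1g.
move=> u v w u' v' w' /arc [a [b [ab Gu -> ->]]] /arc [a' [b' [ab' Gu' -> ->]]].
set b1 := tperm a a' b.
have b1a' : b1 != a'.
  by rewrite /b1 -{2}(tpermL a a') (inj_eq (@perm_inj _ _)) eq_sym.
set sigma := tperm a a' * tperm b1 b'.
have sa : sigma a = a'.
  by rewrite /sigma permM tpermL tpermD // eq_sym.
have sb : sigma b = b' by rewrite /sigma permM -/b1 tpermL.
have [f Af [fg fz]] := P1 sigma.
have fM := morphicP (Aut_morphic Af).
have fG : forall x, x \in G -> f x \in G by move=> x; apply: Aut_closed.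
exists sigma, f, ((f u)^-1 * u'); split => //.
  by rewrite groupM ?groupV ?fG.
have e1 : f u * ((f u)^-1 * u') = u' by rewrite mulVKg.
have Gv : g a * u \in G by rewrite groupM.
split => //.
  by rewrite fM // fg sa -mulgA e1.
by rewrite fM ?Gg // fM // !fg sa sb -!mulgA e1.
Qed.
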